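(* Suppose users' budget and utility parameters are drawn i.i.d. from a distribution $\mathcal{D}$. Then there exists a market instance for which the expected constraint violation of the static expected equilibrium pricing algorithm (which posts the price vector $\mathbf{p}^*$ to every user, where $\mathbf{p}^*$ is computed with complete knowledge of $\mathcal{D}$) is $\Omega(\sqrt{n})$.
   Context: Online Fisher market: $m$ divisible goods, good $j$ with capacity $c_j=nd_j$, $d_j>0$; $n$ users arrive sequentially, user $t$ having budget $w_t>0$ and utility vector $\mathbf{u}_t\ge\mathbf{0}$, with $(w_t,\mathbf{u}_t)$ i.i.d. from $\mathcal{D}$ with bounded support. Given price vector $\mathbf{p}^t$, user $t$ consumes an optimal solution $\mathbf{x}_t$ of $\max \mathbf{u}_t^\top\mathbf{x}$ s.t. $(\mathbf{p}^t)^\top\mathbf{x}\le w_t$, $\mathbf{x}\ge\mathbf{0}$. The expected equilibrium price $\mathbf{p}^*$ is an optimal solution of $\min_{\mathbf{p}}\ \sum_{j=1}^m p_jd_j+\mathbb{E}_{(w,\mathbf{u})\sim\mathcal{D}}[w\log w-w\log(\min_{j\in[m]}p_j/u_j)-w]$ (equivalently, the equilibrium prices computed from the expected number of arrivals of each user type). The expected constraint violation is $V_n=\mathbb{E}[\|(\sum_{t=1}^n\mathbf{x}_t-\mathbf{c})_+\|_2]$. Asymptotics are as $n\to\infty$ with the instance fixed. *)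

(* Defs.v *)
From HB Require Import structures.
From mathcomp Require Import all_boot all_order all_algebra.
From mathcomp Require Import reals exp.
Set Implicit Arguments. Unset Strict Implicit. Unset Printing Implicit Defensive.
Import Order.TTheory GRing.Theory Num.Theory.
Local Open Scope ring_scope.

Section Market.
Variable R : realType.

(* A market instance: m goods with per-capita capacities d (c_j = n d_j);
   the user distribution D is a finitely supported distribution over K user
   types, type k having probability q k, budget w k, utility vector u k. *)

(* min_j p_j / u_j, with the convention p_j / 0 = +oo, written as
   (max_j u_j / p_j)^-1 (valid for p > 0, u >= 0, u <> 0). *)
Definition min_ratio (m : nat) (u p : 'I_m -> R) : R :=
  (\big[Num.max/0]_(j < m) (u j / p j))^-1.

Definition eq_objective (m K : nat) (q w : 'I_K -> R) (u : 'I_K -> 'I_m -> R)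
    (d : 'I_m -> R) (p : 'I_m -> R) : R :=
  \sum_(j < m) p j * d j
  + \sum_(k < K) q k * (w k * ln (w k) - w k * ln (min_ratio (u k) p) - w k).

Definition pos_vec (m : nat) (p : 'I_m -> R) : Prop := forall j, 0 < p j.
Definition nonneg_vec (m : nat) (x : 'I_m -> R) : Prop := forall j, 0 <= x j.

Definition expected_eq_price (m K : nat) (q w : 'I_K -> R)
    (u : 'I_K -> 'I_m -> R) (d : 'I_m -> R) (p : 'I_m -> R) : Prop :=
  pos_vec p /\
  forall p' : 'I_m -> R, pos_vec p' -> eq_objective q w u d p <= eq_objective q w u d p'.

Definition user_optimal (m : nat) (p : 'I_m -> R) (wt : R) (ut x : 'I_m -> R) : Prop :=
  nonneg_vec x /\ \sum_(j < m) p j * x j <= wt /\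
  forall y : 'I_m -> R, nonneg_vec y -> \sum_(j < m) p j * y j <= wt ->
    \sum_(j < m) ut j * y j <= \sum_(j < m) ut j * x j.

(* Expected constraint violation E[ || (sum_t x_t - n d)_+ ||_2 ] when the
   n users' types are i.i.d. with law q and user t of type k consumes
   sel t k. *)
Definition violation (m K n : nat) (q : 'I_K -> R) (d : 'I_m -> R)
    (sel : 'I_n -> 'I_K -> 'I_m -> R) : R :=
  \sum_(s : {ffun 'I_n -> 'I_K})
    (\prod_(t < n) q (s t)) *
    Num.sqrt (\sum_(j < m)
      (Num.max 0 (\sum_(t < n) sel t (s t) j - n%:R * d j)) ^+ 2).

End Market.

(* Main.v *)
Require Import Defs.
From HB Require Import structures.
From mathcomp Require Import all_boot all_order all_algebra.
From mathcomp Require Import reals exp.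
From mathcomp Require Import ring lra.
Import Order.TTheory GRing.Theory Num.Theory.
Set Implicit Arguments. Unset Strict Implicit.
Local Open Scope ring_scope.

Section E.
Variable R : realType.
Variables (K : nat) (q xi : 'I_K -> R).

Definition Ef (n : nat) (g : R -> R) : R :=
  \sum_(f : {ffun 'I_n -> 'I_K}) (\prod_(t < n) q (f t)) * g (\sum_(t < n) xi (f t)).

Definition hcons n (p : 'I_K * {ffun 'I_n -> 'I_K}) : {ffun 'I_n.+1 -> 'I_K} :=
  [ffun i => oapp p.2 p.1 (unlift ord0 i)].
Definition huncons n (F : {ffun 'I_n.+1 -> 'I_K}) : 'I_K * {ffun 'I_n -> 'I_K} :=
  (F ord0, [ffun i => F (lift ord0 i)]).

Lemma hconsK n : cancel (@hcons n) (@huncons n).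
Proof.
move=> [k f]; rewrite /huncons /hcons !ffunE unlift_none /=; congr (_, _).
by apply/ffunP => i; rewrite !ffunE liftK.
Qed.
Lemma hunconsK n : cancel (@huncons n) (@hcons n).
Proof.
move=> F; apply/ffunP => i; rewrite /huncons /hcons ffunE.
by case: unliftP => [j ->|->] /=; rewrite ?ffunE.
Qed.

Lemma Ef_rec n g : Ef n.+1 g = Ef n (fun x => \sum_(k < K) q k * g (xi k + x)).
Proof.
rewrite /Ef (reindex (@hcons n)); last by exists (@huncons n) => x _; [apply: hconsK| apply: hunconsK].
rewrite -(pair_bigA _ (fun k f => (\prod_(t < n.+1) q (@hcons n (k, f) t)) *
   g (\sum_(t < n.+1) xi (@hcons n (k, f) t)))) /=.
rewrite exchange_big /=; apply: eq_bigr => f _.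
rewrite mulr_sumr; apply: eq_bigr => k _.
rewrite big_ord_recl [X in g X]big_ord_recl /= /hcons !ffunE unlift_none /=.
under eq_bigr do rewrite ffunE liftK /=.
under [X in g (_ + X)]eq_bigr do rewrite ffunE liftK /=.
by rewrite mulrA [q k * _]mulrC -mulrA.
Qed.
Lemma Ef0 g : Ef 0 g = g 0.
Proof.
rewrite /Ef (big_pred1 (@ffun0 _ (fun _ => 'I_K) (card_ord 0))) ?big_ord0 ?mul1r //.
by move=> f /=; symmetry; apply/eqP/ffunP => -[].
Qed.

Lemma Ef_ext n g h : g =1 h -> Ef n g = Ef n h.
Proof. by move=> gh; apply: eq_bigr => f _; rewrite gh. Qed.

Lemma Ef_add n g h : Ef n (fun x => g x + h x) = Ef n g + Ef n h.
Proof. by rewrite /Ef -big_split; apply: eq_bigr => f _; rewrite mulrDr. Qed.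

Lemma Ef_scale n c g : Ef n (fun x => c * g x) = c * Ef n g.
Proof. by rewrite /Ef mulr_sumr; apply: eq_bigr => f _; rewrite mulrCA. Qed.

Lemma Ef_le n g h : (forall k, 0 <= q k) -> (forall x, g x <= h x) -> Ef n g <= Ef n h.
Proof.
move=> q0 gh; apply: ler_sum => f _; apply: ler_wpM2l; last exact: gh.
by apply: prodr_ge0 => t _.
Qed.

Lemma Ef_const n c : \sum_(k < K) q k = 1 -> Ef n (fun _ => c) = c.
Proof.
move=> q1; elim: n => [|n IH]; first by rewrite Ef0.
rewrite Ef_rec -{2}IH; apply: Ef_ext => x.
by rewrite -mulr_suml q1 mul1r.
Qed.
End E.

Section Walk.
Variable R : realType.
Definition qh : 'I_2 -> R := fun _ => 2^-1.
Definition xih : 'I_2 -> R := fun k => 2 * (k : nat)%:R - 1.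

Lemma step g x : \sum_(k < 2) qh k * g (xih k + x) = 2^-1 * g (x - 1) + 2^-1 * g (x + 1).
Proof.
rewrite !big_ord_recr big_ord0 /= add0r /qh /xih /=.
by congr (_ * g _ + _ * g _); rewrite /=; lra.
Qed.

Lemma qh1 : \sum_(k < 2) qh k = 1.
Proof. by rewrite !big_ord_recr big_ord0 /= /qh; lra. Qed.

Lemma m1 n : Ef qh xih n (fun x => x) = 0.
Proof.
elim: n => [|n IH]; first by rewrite Ef0.
rewrite Ef_rec -[RHS]IH; apply: Ef_ext => x.
by have /= -> := step (fun y => y) x; lra.
Qed.

Lemma m2 n : Ef qh xih n (fun x => x ^+ 2) = n%:R.
Proof.
elim: n => [|n IH]; first by rewrite Ef0 expr0n.
rewrite Ef_rec (@Ef_ext _ _ _ _ _ _ (fun x => x ^+ 2 + 1)); last first.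
  by move=> x; have /= -> := step (fun y => y ^+ 2) x; field.
by rewrite Ef_add IH Ef_const ?qh1 // -natr1.
Qed.

Lemma m4 n : Ef qh xih n (fun x => x ^+ 4) = 3 * n%:R ^+ 2 - 2 * n%:R.
Proof.
elim: n => [|n IH]; first by rewrite Ef0 !expr0n /=; ring.
rewrite Ef_rec (@Ef_ext _ _ _ _ _ _ (fun x => x ^+ 4 + (6 * x ^+ 2 + 1))); last first.
  by move=> x; have /= -> := step (fun y => y ^+ 4) x; field.
rewrite Ef_add IH Ef_add Ef_scale m2 Ef_const ?qh1 // -natr1; ring.
Qed.

Lemma maxpoly (b x : R) : 0 < b ->
  2^-1 * x + (3/4 * b) * x ^+ 2 + (- 4^-1 * b ^+ 3) * x ^+ 4 <= Num.max 0 x.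
Proof.
move=> b0.
have key : forall t, 0 <= t -> 3/2 * b * t ^+ 2 - 2^-1 * b ^+ 3 * t ^+ 4 <= t.
  move=> t t0.
  have : 0 <= t * (b * t - 1) ^+ 2 * (b * t + 2).
    have h1 : 0 <= b * t + 2 by rewrite addr_ge0 // mulr_ge0 // ltW.
    by apply: mulr_ge0 => //; apply: mulr_ge0 => //; apply: sqr_ge0.
  move=> h; nra.
have hx := key `|x| (normr_ge0 x).
have e2 : `|x| ^+ 2 = x ^+ 2 by rewrite -normrX ger0_norm // sqr_ge0.
have e4 : `|x| ^+ 4 = x ^+ 4 by rewrite -[4%N]/(2 * 2)%N !exprM e2.
rewrite e2 e4 in hx.
case: (real_leP (num_real (0:R)) (num_real x)) => x0.
  by rewrite ger0_norm // in hx; nra.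
by rewrite ltr0_norm // in hx; nra.
Qed.

Definition wh (k : 'I_2) : R := 1 + 2 * (k : nat)%:R.
Definition uh : 'I_2 -> 'I_1 -> R := fun _ _ => 1.
Definition dh : 'I_1 -> R := fun _ => 2.

Lemma lnle (x : R) : 0 < x -> ln x <= x - 1.
Proof. by move=> x0; have := expR_ge1Dx (ln x); rewrite lnK ?posrE //; lra. Qed.

Lemma lnlt (x : R) : 0 < x -> x != 1 -> ln x < x - 1.
Proof.
move=> x0 x1; have : ln x != 0 by rewrite ln_eq0.
by move=> /expR_gt1Dx; rewrite lnK ?posrE //; lra.
Qed.

Lemma minr1 (p : 'I_1 -> R) : 0 < p ord0 -> min_ratio (fun _ => 1) p = p ord0.
Proof.
move=> p0; rewrite /min_ratio big_ord_recl big_ord0 max_l; last first.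
  by rewrite ltW // divr_gt0.
by rewrite div1r invrK.
Qed.

Lemma obj (p : 'I_1 -> R) : pos_vec p ->
  eq_objective qh wh uh dh p = 2 * p ord0 - 2 * ln (p ord0) + (2^-1 * (3 * ln 3) - 2).
Proof.
move=> pp; have p0 := pp ord0.
rewrite /eq_objective big_ord_recl big_ord0 addr0 big_ord_recl big_ord1 /uh !minr1 //.
rewrite /qh /wh /dh /=.
have -> : (1 + 2 * 0%:R : R) = 1 by rewrite mulr0 addr0.
have -> : (1 + 2 * 1%:R : R) = 3 by rewrite mulr1; lra.
rewrite ln1; lra.
Qed.

Lemma eq_price_one (p : 'I_1 -> R) : expected_eq_price qh wh uh dh p -> forall j, p j = 1.
Proof.
move=> [pp popt] j; rewrite (ord1 j).
have p0 := pp ord0.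
have := popt (fun _ => 1) (fun _ => ltr01).
rewrite !obj // ln1 => h.
apply/eqP; apply/negPn/negP => ne.
have := lnlt p0 ne; lra.
Qed.

Lemma eq_price_ex : expected_eq_price qh wh uh dh (fun _ => 1).
Proof.
split; first by move=> j; exact: ltr01.
move=> p' pp; have h1 : pos_vec (fun _ : 'I_1 => (1:R)) by move=> j; exact: ltr01.
rewrite !obj //.
rewrite ln1; have := lnle (pp ord0); lra.
Qed.

Lemma wh_gt0 k : 0 < wh k.
Proof. by rewrite /wh; apply: ltr_pwDl => //; rewrite mulr_ge0. Qed.

Lemma sel_val (p : 'I_1 -> R) (x : 'I_1 -> R) k :
  (forall j, p j = 1) -> user_optimal p (wh k) (uh k) x -> forall j, x j = wh k.
Proof.
move=> p1 [x0 [bud opt]] j; rewrite (ord1 j).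
have := opt (fun _ => wh k) (fun _ => ltW (wh_gt0 k)).
rewrite !big_ord_recl !big_ord0 !addr0 /uh p1 in bud * => h.
rewrite !mul1r in h bud *; have := h (le_refl _); lra.
Qed.
End Walk.

Theorem corollary1 (R : realType) :
  exists (m K : nat) (q w : 'I_K -> R) (u : 'I_K -> 'I_m -> R) (d : 'I_m -> R),
    [/\ ((0 < m)%N /\ forall j, 0 < d j),
        ((forall k, 0 <= q k) /\ \sum_(k < K) q k = 1),
        ((forall k, 0 < w k) /\ (forall k j, 0 <= u k j) /\
         (forall k, exists j, 0 < u k j)),
        (exists pstar, expected_eq_price q w u d pstar) &
        exists (c : R) (N : nat), 0 < c /\
          forall pstar : 'I_m -> R, expected_eq_price q w u d pstar ->
          forall (n : nat) (sel : 'I_n -> 'I_K -> 'I_m -> R),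
            (forall t k, user_optimal pstar (w k) (u k) (sel t k)) ->
            (N <= n)%N ->
            c * Num.sqrt (n%:R) <= violation q d sel].
Proof.
exists 1%N, 2%N, (@qh R), (@wh R), (@uh R), (@dh R); split.
- by split => // j; rewrite /dh.
- by split; [move=> k; rewrite /qh; lra | exact: qh1].
- split; first exact: wh_gt0.
  by split => [k j|k]; [rewrite /uh | exists ord0; rewrite /uh].
- by exists (fun _ => 1); exact: eq_price_ex.
exists (8^-1), 1%N; split; first lra.
move=> pstar hp n sel hsel n1.
have p1 := eq_price_one hp.
have sv : forall t k j, sel t k j = wh R k.
  by move=> t k j; exact: sel_val p1 (hsel t k) j.
have -> : violation (qh R) (dh R) sel = Ef (qh R) (xih R) n (fun x => Num.max 0 x).
  apply: eq_bigr => s _; congr (_ * _).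
  rewrite big_ord_recl big_ord0 addr0.
  have -> : \sum_(t < n) sel t (s t) ord0 - n%:R * dh R ord0 = \sum_(t < n) xih R (s t).
    rewrite /dh /xih; under eq_bigr do rewrite sv.
    rewrite /wh sumrB sumr_const card_ord -mulr_natl.
    by rewrite big_split /= sumr_const card_ord; lra.
  by rewrite sqrtr_sqr ger0_norm // le_max lexx.
set sq := Num.sqrt n%:R.
have sq0 : 0 < sq by rewrite sqrtr_gt0 ltr0n.
have nsq : n%:R = sq ^+ 2 by rewrite sqr_sqrtr // ler0n.
set b := (2 * sq)^-1.
have b0 : 0 < b by rewrite invr_gt0 mulr_gt0.
have q0 : forall k, 0 <= qh R k by move=> k; rewrite /qh; lra.
apply: le_trans (Ef_le _ _ q0 (fun x => maxpoly x b0)).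
rewrite (@Ef_add _ _ _ _ _ (fun x => 2^-1 * x + 3 / 4 * b * x ^+ 2)
   (fun x => - 4^-1 * b ^+ 3 * x ^+ 4)).
rewrite (@Ef_add _ _ _ _ _ (fun x => 2^-1 * x) (fun x => 3 / 4 * b * x ^+ 2)).
rewrite !Ef_scale m1 m2 ?(Ef_scale _ _ _ _ (fun x => x ^+ 4)) m4 nsq.
have -> : 2^-1 * 0 + 3 / 4 * b * sq ^+ 2 + - 4^-1 * b ^+ 3 * (3 * (sq ^+ 2) ^+ 2 - 2 * sq ^+ 2)
   = 9 / 32 * sq + b / 8.
  rewrite /b; field; lra.
lra.
Qed.
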